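(* Let $X_1\in\mathbb{B}^2\setminus\{0\}$ and $c=\rho_{\mathbb{B}^2}(0,X_1)$. Let $M_0$ be one of the two points of $L_{0X_1}(0)\cap S^1$. For $k\ge1$, given $X_1,\dots,X_k$ on the line $L(0,X_1)$, let $M_k$ be the point of $L_{0X_1}(X_k)\cap S^1$ lying on the same side of $L(0,X_1)$ as $M_0$, let $N_{k+1}$ be the intersection point of the line $L(M_{k-1},X_k)$ with $S^1$ other than $M_{k-1}$, and let $X_{k+1}=L_{0X_1}(N_{k+1})\cap L(0,X_1)$. Then all $X_k$ lie on the radius of $\mathbb{B}^2$ through $X_1$ and $\rho_{\mathbb{B}^2}(0,X_k)=kc$ for every $k\ge1$.
   Context: $\mathbb{B}^2$ is the unit disk, $S^1$ the unit circle, $\rho_{\mathbb{B}^2}$ the hyperbolic distance given by $\sinh\frac{\rho_{\mathbb{B}^2}(x,y)}{2}=\frac{|x-y|}{\sqrt{1-|x|^2}\sqrt{1-|y|^2}}$. $L(p,q)$ is the line through $p,q$, and $L_{0X_1}(p)$ is the line through $p$ orthogonal to $L(0,X_1)$. *)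

(* Defs.v *)
From Stdlib Require Import Reals.
Open Scope R_scope.

Definition pt : Type := (R * R)%type.
Definition origin : pt := (0, 0).
Definition dot (p q : pt) : R := fst p * fst q + snd p * snd q.
Definition norm (p : pt) : R := sqrt (dot p p).
Definition det (p q : pt) : R := fst p * snd q - snd p * fst q.
Definition psub (p q : pt) : pt := (fst p - fst q, snd p - snd q).
Definition pscale (s : R) (p : pt) : pt := (s * fst p, s * snd p).

Definition on_circle (p : pt) : Prop := norm p = 1.
Definition in_disk (p : pt) : Prop := norm p < 1.

Definition arsinh (t : R) : R := ln (t + sqrt (t ^ 2 + 1)).

Definition hdist (x y : pt) : R :=
  2 * arsinh (norm (psub x y) / (sqrt (1 - norm x ^ 2) * sqrt (1 - norm y ^ 2))).

(* z lies on the line L(p,q) through p and q (p <> q) *)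
Definition on_line (p q z : pt) : Prop := det (psub q p) (psub z p) = 0.

(* z lies on L_{0X1}(p): the line through p orthogonal to L(0,X1) *)
Definition on_perp (X1 p z : pt) : Prop := dot (psub z p) X1 = 0.

Definition same_side (X1 a b : pt) : Prop := det X1 a * det X1 b > 0.

(* Main.v *)
Require Import Defs.
From Stdlib Require Import Reals Lra Lia Psatz.
Open Scope R_scope.

Lemma step (p q a m x n1 n2 m1 m2 : R) :
  a*a = p*p+q*q -> 0 < a < 1 -> 0 <= m < 1 -> x = (m+a)/(1+m*a) ->
  m1*m1+m2*m2 = 1 -> m1*p+m2*q = m*a ->
  n1*n1+n2*n2 = 1 -> (n1,n2) <> (m1,m2) ->
  (x/a*p - m1)*(n2-m2) - (x/a*q - m2)*(n1-m1) = 0 ->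
  n1*p + n2*q = a * ((x+a)/(1+x*a)).
Proof.
  intros Ha Ha1 Hm Hx HM HMA HN Hne Hdet.
  set (d1 := x/a*p - m1). set (d2 := x/a*q - m2).
  set (w1 := n1 - m1). set (w2 := n2 - m2).
  assert (Hma : 0 < 1 + m*a) by nra.
  assert (Hx0 : 0 <= x < 1).
  { rewrite Hx. split. unfold Rdiv; apply Rmult_le_pos; [lra| left; apply Rinv_0_lt_compat; lra].
    apply (Rmult_lt_reg_r (1+m*a)); auto. unfold Rdiv; rewrite Rmult_assoc, Rinv_l by lra. nra. }
  assert (HD2 : d1*d1 + d2*d2 = x*x - 2*x*m + 1).
  { unfold d1, d2.
    replace ((x / a * p - m1) * (x / a * p - m1) + (x / a * q - m2) * (x / a * q - m2))
      with (x*x/(a*a) * (p*p+q*q) - 2*x/a*(m1*p+m2*q) + (m1*m1+m2*m2)) by (field; lra).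
    rewrite <- Ha, HMA, HM. field. lra. }
  assert (HD2p : 0 < x*x - 2*x*m + 1) by nra.
  set (D2 := x*x - 2*x*m + 1) in *.
  set (lam := (d1*w1 + d2*w2)/D2).
  assert (Hw1 : w1 = lam * d1).
  { assert (Hid : (d1*w1+d2*w2)*d1 = w1*D2).
    { rewrite <- HD2. assert (Hd : d1*w2 - d2*w1 = 0) by (unfold d1, d2, w1, w2; lra).
      assert (E : (d1 * w1 + d2 * w2) * d1 - w1 * (d1 * d1 + d2 * d2) = d2*(d1*w2 - d2*w1)) by ring.
      assert (E' : (d1 * w1 + d2 * w2) * d2 - w2 * (d1 * d1 + d2 * d2) = -d1*(d1*w2 - d2*w1)) by ring.
      rewrite Hd in E, E'. lra. }
    unfold lam. unfold Rdiv. rewrite Rmult_assoc, (Rmult_comm (/D2)), <- Rmult_assoc, Hid.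
    field. lra. }
  assert (Hw2 : w2 = lam * d2).
  { assert (Hid : (d1*w1+d2*w2)*d2 = w2*D2).
    { rewrite <- HD2. assert (Hd : d1*w2 - d2*w1 = 0) by (unfold d1, d2, w1, w2; lra).
      assert (E : (d1 * w1 + d2 * w2) * d1 - w1 * (d1 * d1 + d2 * d2) = d2*(d1*w2 - d2*w1)) by ring.
      assert (E' : (d1 * w1 + d2 * w2) * d2 - w2 * (d1 * d1 + d2 * d2) = -d1*(d1*w2 - d2*w1)) by ring.
      rewrite Hd in E, E'. lra. }
    unfold lam. unfold Rdiv. rewrite Rmult_assoc, (Rmult_comm (/D2)), <- Rmult_assoc, Hid.
    field. lra. }
  assert (Hl0 : lam <> 0).
  { intro H0. apply Hne. unfold w1, w2 in *. rewrite H0 in Hw1, Hw2.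
    f_equal; lra. }
  assert (HMD : m1*d1 + m2*d2 = x*m - 1).
  { unfold d1, d2.
    replace (m1 * (x / a * p - m1) + m2 * (x / a * q - m2))
      with (x/a*(m1*p+m2*q) - (m1*m1+m2*m2)) by (field; lra).
    rewrite HMA, HM. field. lra. }
  assert (Hlam : lam = 2*(1 - x*m)/D2).
  { assert (E : n1 = m1 + lam*d1) by (unfold w1 in Hw1; lra).
    assert (E2 : n2 = m2 + lam*d2) by (unfold w2 in Hw2; lra).
    rewrite E, E2 in HN.
    assert (lam * (2*(m1*d1+m2*d2) + lam*(d1*d1+d2*d2)) = 0) by nra.
    rewrite HMD, HD2 in H.
    apply Rmult_integral in H. destruct H as [H|H]; [contradiction|].
    apply (Rmult_eq_reg_r D2); [|lra]. field_simplify; [|lra].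
    unfold D2 in *; lra. }
  assert (E : n1 = m1 + lam*d1) by (unfold w1 in Hw1; lra).
  assert (E2 : n2 = m2 + lam*d2) by (unfold w2 in Hw2; lra).
  rewrite E, E2.
  replace ((m1 + lam * d1) * p + (m2 + lam * d2) * q)
    with ((m1*p+m2*q) + lam*(x/a*(p*p+q*q) - (m1*p+m2*q))) by (unfold d1, d2; field; lra).
  rewrite <- Ha, HMA, Hlam. unfold D2. rewrite Hx.
  field. repeat split; try lra; try nra.
  assert (0 < (1-m*m)*((1+m*a)*(1+m*a))) by (apply Rmult_lt_0_compat; nra).
  assert (0 <= ((m+a) - m*(1+m*a))*((m+a) - m*(1+m*a))) by apply Rle_0_sqr. nra.
Qed.

Lemma hdist_on_axis (p q a s : R) :
  a*a = p*p+q*q -> 0 < a -> 0 <= s < 1 ->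
  hdist origin (pscale (s/a) (p,q)) = ln ((1+s)/(1-s)).
Proof.
  intros Ha Ha0 Hs.
  assert (N1 : norm (psub origin (pscale (s/a) (p,q))) = s).
  { unfold norm, dot, psub, pscale, origin; simpl.
    replace ((0 - s / a * p) * (0 - s / a * p) + (0 - s / a * q) * (0 - s / a * q)) with (s*s).
    apply sqrt_square; lra.
    transitivity (s*s/(a*a)*(p*p+q*q)). rewrite <- Ha. field; lra. field; lra. }
  assert (N3 : norm (pscale (s/a) (p,q)) = s).
  { unfold norm, dot, psub, pscale, origin; simpl.
    replace (s / a * p * (s / a * p) + s / a * q * (s / a * q)) with (s*s).
    apply sqrt_square; lra.
    transitivity (s*s/(a*a)*(p*p+q*q)). rewrite <- Ha. field; lra. field; lra. }
  assert (N2 : norm origin = 0).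
  { unfold norm, dot, origin; simpl. rewrite Rmult_0_l, Rplus_0_l. apply sqrt_0. }
  unfold hdist. rewrite N1, N2, N3.
  replace (1 - 0^2) with 1 by ring. rewrite sqrt_1, Rmult_1_l.
  replace (1 - s^2) with (1 - s*s) by ring.
  assert (H1 : 0 < 1 - s*s) by nra.
  set (r := sqrt (1 - s*s)).
  assert (Hr : 0 < r) by (apply sqrt_lt_R0; lra).
  assert (Hrr : r*r = 1 - s*s) by (apply sqrt_sqrt; lra).
  unfold arsinh.
  replace ((s/r)^2 + 1) with ((1/r)*(1/r)).
  2:{ apply (Rmult_eq_reg_r (r*r)); [|nra]. field_simplify; try lra; try nra. }
  rewrite sqrt_square by (left; apply Rdiv_lt_0_compat; lra).
  replace (s/r + 1/r) with ((1+s)/r) by (field; lra).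
  assert (Hy : 0 < (1+s)/r) by (apply Rdiv_lt_0_compat; lra).
  replace (2 * ln ((1+s)/r)) with (ln ((1+s)/r) + ln ((1+s)/r)) by ring.
  rewrite <- ln_mult by lra. f_equal.
  apply (Rmult_eq_reg_r (r*r)); [|nra]. field_simplify; [|lra|lra].
  replace (r^2) with (1 - s*s) by (rewrite <- Hrr; ring). field. lra.
Qed.

Definition sG (a : R) (k : nat) : R :=
  ((((1+a)/(1-a))^k - 1) / (((1+a)/(1-a))^k + 1)).

Lemma G_ge1 a : 0 < a < 1 -> 1 <= (1+a)/(1-a).
Proof. intros H. apply (Rmult_le_reg_r (1-a)); [lra|]. field_simplify; lra. Qed.

Lemma sG_bnd a k : 0 < a < 1 -> 0 <= sG a k < 1.
Proof.
  intros H. unfold sG. pose proof (pow_R1_Rle _ k (G_ge1 a H)).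
  set (g := ((1+a)/(1-a))^k) in *. split.
  - apply Rmult_le_pos; [lra|]. left; apply Rinv_0_lt_compat; lra.
  - apply (Rmult_lt_reg_r (g+1)); [lra|]. field_simplify; lra.
Qed.

Lemma sG_rec a k : 0 < a < 1 -> sG a (S k) = (sG a k + a)/(1 + sG a k * a).
Proof.
  intros H. unfold sG. rewrite <- tech_pow_Rmult.
  pose proof (pow_R1_Rle _ k (G_ge1 a H)).
  set (g := ((1+a)/(1-a))^k) in *.
  field. repeat split; try lra.
  nra.
Qed.

Lemma sG_ratio a k : 0 < a < 1 -> (1 + sG a k)/(1 - sG a k) = ((1+a)/(1-a))^k.
Proof.
  intros H. unfold sG. pose proof (pow_R1_Rle _ k (G_ge1 a H)).
  set (g := ((1+a)/(1-a))^k) in *. field. lra.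
Qed.

Lemma sG_0 a : sG a 0 = 0.
Proof. unfold sG. simpl. field. Qed.

Lemma circle_dot (m1 m2 : R) : on_circle (m1,m2) -> m1*m1+m2*m2 = 1.
Proof.
  unfold on_circle, norm, dot; simpl. intro H.
  assert (0 <= m1*m1+m2*m2) by nra.
  rewrite <- (sqrt_sqrt (m1*m1+m2*m2)) by lra. rewrite H. ring.
Qed.

Lemma next_X (p q a y1 y2 n1 n2 t : R) : a*a = p*p+q*q -> 0 < a ->
  on_line origin (p,q) (y1,y2) -> on_perp (p,q) (n1,n2) (y1,y2) ->
  n1*p+n2*q = a*t -> (y1,y2) = pscale (t/a) (p,q).
Proof.
  unfold on_line, on_perp, det, dot, psub, pscale, origin; simpl.
  intros Ha Ha0 H1 H2 H3.
  assert (S1 : y1*p + y2*q = a*t) by lra.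
  assert (S2 : p*y2 - q*y1 = 0) by lra.
  assert (E : y1*(p*p+q*q) = p*a*t /\ y2*(p*p+q*q) = q*a*t).
  { split.
    - replace (y1*(p*p+q*q)) with (p*(y1*p+y2*q) - q*(p*y2-q*y1)) by ring.
      rewrite S1, S2. ring.
    - replace (y2*(p*p+q*q)) with (q*(y1*p+y2*q) + p*(p*y2-q*y1)) by ring.
      rewrite S1, S2. ring. }
  rewrite <- Ha in E. destruct E as [E1 E2].
  f_equal.
  - apply (Rmult_eq_reg_r (a*a)); [|nra]. rewrite E1. field. lra.
  - apply (Rmult_eq_reg_r (a*a)); [|nra]. rewrite E2. field. lra.
Qed.

Theorem corollary4p4 (X M N : nat -> pt) :
  in_disk (X 1%nat) -> X 1%nat <> origin ->
  (* M_0 is a point of L_{0X1}(0) ∩ S^1 *)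
  on_circle (M 0%nat) -> on_perp (X 1%nat) origin (M 0%nat) ->
  (* M_k ∈ L_{0X1}(X_k) ∩ S^1, same side of L(0,X1) as M_0 *)
  (forall k : nat, (1 <= k)%nat ->
     on_circle (M k) /\ on_perp (X 1%nat) (X k) (M k)
     /\ same_side (X 1%nat) (M k) (M 0%nat)) ->
  (* N_{k+1} ∈ L(M_{k-1}, X_k) ∩ S^1, N_{k+1} <> M_{k-1} *)
  (forall k : nat, (1 <= k)%nat ->
     on_circle (N (S k)) /\ N (S k) <> M (k - 1)%nat
     /\ on_line (M (k - 1)%nat) (X k) (N (S k))) ->
  (* X_{k+1} = L_{0X1}(N_{k+1}) ∩ L(0,X1) *)
  (forall k : nat, (1 <= k)%nat ->
     on_line origin (X 1%nat) (X (S k)) /\ on_perp (X 1%nat) (N (S k)) (X (S k))) ->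
  forall k : nat, (1 <= k)%nat ->
    (exists s : R, 0 <= s < 1 /\ X k = pscale (s / norm (X 1%nat)) (X 1%nat))
    /\ hdist origin (X k) = INR k * hdist origin (X 1%nat).
Proof.
  intros Hdisk Hne0 HM0c HM0p HMk HNk HXk.
  assert (HX1 : X 1%nat = (fst (X 1%nat), snd (X 1%nat))) by (destruct (X 1%nat); reflexivity).
  set (p := fst (X 1%nat)) in *. set (q := snd (X 1%nat)) in *.
  rewrite HX1 in Hdisk, Hne0, HM0p, HMk, HXk. rewrite HX1.
  set (a := norm (p,q)).
  assert (Hpq : 0 < p*p+q*q).
  { destruct (Req_dec p 0); destruct (Req_dec q 0); try nra.
    exfalso; apply Hne0; unfold origin; subst; congruence. }
  assert (Ha : a*a = p*p+q*q) by (apply sqrt_sqrt; lra).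
  assert (Ha0 : 0 < a) by (apply sqrt_lt_R0; exact Hpq).
  assert (Hab : 0 < a < 1) by (split; [exact Ha0 | exact Hdisk]).
  assert (HMd : forall j, (1 <= j)%nat -> X j = pscale (sG a j / a) (p,q) ->
     on_circle (M j) /\ fst (M j) * p + snd (M j) * q = sG a j * a).
  { intros j Hj HXj. destruct (HMk j Hj) as [Hc [Hp _]]. split; [exact Hc|].
    rewrite HXj in Hp. unfold on_perp, dot, psub, pscale in Hp; simpl in Hp.
    transitivity (sG a j / a * (p*p+q*q)); [nra|]. rewrite <- Ha. field. lra. }
  assert (HM0d : fst (M 0%nat) * p + snd (M 0%nat) * q = sG a 0 * a).
  { rewrite sG_0. unfold on_perp, dot, psub, origin in HM0p; simpl in HM0p. lra. }
  assert (Hstep : forall j, (1 <= j)%nat ->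
     on_circle (M (j-1)%nat) ->
     fst (M (j-1)%nat) * p + snd (M (j-1)%nat) * q = sG a (j-1) * a ->
     X j = pscale (sG a j / a) (p,q) ->
     X (S j) = pscale (sG a (S j) / a) (p,q)).
  { intros j Hj Hc Hd HXj.
    destruct (HNk j Hj) as [HNc [HNne HNl]]. destruct (HXk j Hj) as [HXl HXp].
    rewrite HXj in HNl.
    destruct (M (j-1)%nat) as [m1 m2]. destruct (N (S j)) as [n1 n2].
    destruct (X (S j)) as [y1 y2]. simpl in Hd.
    apply (next_X p q a y1 y2 n1 n2); auto.
    rewrite (sG_rec a j Hab).
    apply (step p q a (sG a (j-1)) (sG a j) n1 n2 m1 m2); auto.
    all: first [ apply sG_bnd; auto
               | apply circle_dot; auto
               | (replace j with (S (j-1)) at 1 by lia; apply sG_rec; auto)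
               | (unfold on_line, det, psub, pscale in HNl; simpl in HNl; exact HNl) ]. }
  assert (HX1' : X 1%nat = pscale (sG a 1 / a) (p,q)).
  { rewrite HX1. unfold sG, pscale. simpl. f_equal; field; lra. }
  assert (Hinv : forall k, X (S k) = pscale (sG a (S k) / a) (p,q) /\
                           X (S (S k)) = pscale (sG a (S (S k)) / a) (p,q)).
  { induction k as [|k IH].
    - split; [exact HX1'|]. apply Hstep; auto.
    - destruct IH as [IH1 IH2]. split; [exact IH2|].
      destruct (HMd (S k) ltac:(lia) IH1) as [Hc Hd].
      apply Hstep; auto; lia. }
  intros k Hk.
  assert (HXk' : X k = pscale (sG a k / a) (p,q)).
  { destruct k; [lia|]. apply Hinv. }
  split.
  - exists (sG a k). split; [apply sG_bnd; auto | exact HXk'].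
  - assert (HG : 0 < (1+a)/(1-a)) by (apply Rlt_le_trans with 1; [lra|]; apply G_ge1; auto).
    assert (Hh1 : hdist origin (p,q) = ln ((1+a)/(1-a))).
    { rewrite <- HX1, HX1'. rewrite (hdist_on_axis p q a) by (auto; apply sG_bnd; auto).
      rewrite sG_ratio by auto. rewrite pow_1. reflexivity. }
    rewrite Hh1, HXk'. rewrite (hdist_on_axis p q a) by (auto; apply sG_bnd; auto).
    rewrite sG_ratio by auto. apply ln_pow; auto.
Qed.
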